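(* Let $E$ be a Borel space and consider the setting of the context. For each stopping time $\tau$, the induced policy $\pi_\tau=\{d^\tau_n,n\ge0\}$ belongs to $\Pi^0_{DH}$, i.e. each $d^\tau_n:\mathbb{R}\times\hat H_n\to A$ is measurable with $d^\tau_n(s,\hat h_n)\in A(x_n)$, and $d^\tau_n(0,\hat h_n)=0$ for all $\hat h_n\in H^0_n$.
   Context: $\Omega=\{(x_0,t_1,x_1,t_2,x_2,\dots): x_0\in E,(t_n,x_n)\in\mathbb{R}_+\times E\}$ with product Borel $\sigma$-algebra; $X_n(\omega)=x_n$, $T_0=0$, $T_{n+1}(\omega)=t_{n+1}$, $Y_n(\omega)=(x_0,t_1,x_1,\dots,t_n,x_n)$, $\mathcal{F}_n=\sigma(T_0,X_0,\dots,T_n,X_n)$. A stopping time is $\tau:\Omega\to\{0,1,2,\dots\}\cup\{+\infty\}$ with $\{\tau=n\}\in\mathcal{F}_n$ for all $n$. Decision model: $\hat E=E\cup\{\Delta\}$, $A=\{0,1\}$, $A(x)=\{0,1\}$ for $x\in E$, $A(\Delta)=\{1\}$; $\hat H_n$ is the set of histories $\hat h_n=(x_0,a_0,t_1,x_1,\dots,a_{n-1},t_n,x_n)$ with $x_m\in\hat E$, $a_m\in A(x_m)$, $t_m\in\mathbb{R}_+$; $H^0_n=E\times(\{0\}\times\mathbb{R}_+\times E)^n\subset\hat H_n$. A deterministic policy is a sequence $\{d_n\}$ of measurable $d_n:\mathbb{R}\times\hat H_n\to A$ with $d_n(s,\hat h_n)\in A(x_n)$; $\Pi^0_{DH}$ is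 the set of deterministic policies with $d_n(0,\hat h_n)=0$ for all $n$ and $\hat h_n\in H^0_n$. Induced policy: $B^\tau_n=\{Y_n(\omega):\omega\in\{\tau=n\}\}$; for $\hat h_n\in\hat H_n$ and $s\in\mathbb{R}$, $d^\tau_n(s,\hat h_n)=\mathbf{1}_{B^\tau_n}(x_0,t_1,x_1,\dots,t_n,x_n)\mathbf{1}_{(0,\infty)}(s)$ if $\hat h_n\in H^0_n$, and $d^\tau_n(s,\hat h_n)=1$ if $\hat h_n\in\hat H_n\setminus H^0_n$; $\pi_\tau=\{d^\tau_n\}$. *)

(* Defs.v *)
From HB Require Import structures.
From mathcomp Require Import all_boot all_order all_algebra.
From mathcomp Require Import all_classical all_reals all_analysis.
Set Implicit Arguments. Unset Strict Implicit. Unset Printing Implicit Defensive.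
Import Order.TTheory GRing.Theory Num.Theory.
Local Open Scope classical_set_scope.
Local Open Scope ring_scope.

Definition prodSA {T U} (MT : set (set T)) (MU : set (set U)) : set (set (T * U)) :=
  <<s [set X | exists A B, MT A /\ MU B /\ X = A `*` B] >>.

Definition tupleSA {T} (n : nat) (M : set (set T)) : set (set (n.-tuple T)) :=
  <<s [set X | exists S : 'I_n -> set T, (forall i, M (S i)) /\
        X = [set t : n.-tuple T | forall i, S i (tnth t i)]] >>.

Definition discrSA (T : Type) : set (set T) := setT.

Definition mble_on {T U} (MT : set (set T)) (MU : set (set U)) (D : set T)
  (f : T -> U) : Prop :=
  forall Y, MU Y -> exists S, MT S /\ D `&` f @^-1` Y = D `&` S.

Section Setting.
Context (R : realType) (d : measure_display) (E : measurableType d).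

Definition borelR : set (set R) := measurable.
Definition nnSA : set (set {nonneg R}) :=
  [set S | exists B : set R, measurable B /\ S = [set x | B x%:num]].

(* omega = (x0, k |-> (t_{k+1}, x_{k+1})) *)
Definition Omega := (E * (nat -> {nonneg R} * E))%type.

Definition Xc (m : nat) (w : Omega) : E :=
  if m is k.+1 then (w.2 k).2 else w.1.
Definition Tc (m : nat) (w : Omega) : R :=
  if m is k.+1 then ((w.2 k).1)%:num else 0.

Definition Fn (n : nat) : set (set Omega) :=
  <<s [set S | exists m, (m <= n)%N /\
        ((exists B : set E, measurable B /\ S = Xc m @^-1` B) \/
         (exists B : set R, measurable B /\ S = Tc m @^-1` B))] >>.

(* stopping times: values in {0,1,...} U {+oo}, None = +oo *)
Definition stopping_time (tau : Omega -> option nat) : Prop :=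
  forall n, Fn n [set w | tau w = Some n].

Definition Hn (n : nat) := (E * n.-tuple ({nonneg R} * E))%type.
Definition Yn (n : nat) (w : Omega) : Hn n := (w.1, [tuple w.2 i | i < n]).

(* hat E = E U {Delta}, Delta = None ; A = {0,1} = bool (true = 1) *)
Definition Ehat := option E.
Definition EhatSA : set (set Ehat) := [set S | measurable [set x | S (Some x)]].
Definition Aset (x : Ehat) : set bool := if x is Some _ then setT else [set true].

(* ambient space for histories hat h_n = (x0, a0, t1, x1, ..., a_{n-1}, t_n, x_n):
   (x0, i |-> (a_i, t_{i+1}, x_{i+1})) *)
Definition Hamb (n : nat) := (Ehat * n.-tuple (bool * {nonneg R} * Ehat))%type.
Definition HambSA (n : nat) : set (set (Hamb n)) :=
  prodSA EhatSA (@tupleSA _ n (prodSA (prodSA (@discrSA bool) nnSA) EhatSA)).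

Definition hx (n : nat) (h : Hamb n) (m : nat) : Ehat :=
  nth h.1 (h.1 :: [seq p.2 | p <- tval h.2]) m.
Definition ha (n : nat) (h : Hamb n) (i : 'I_n) : bool := (tnth h.2 i).1.1.

Definition Hhat (n : nat) : set (Hamb n) :=
  [set h | forall i : 'I_n, Aset (hx h i) (ha h i)].

(* embedding of H_n onto H^0_n = E x ({0} x R_+ x E)^n *)
Definition iotaH (n : nat) (h : Hn n) : Hamb n :=
  (Some h.1, map_tuple (fun p => (false, p.1, Some p.2)) h.2).
Definition H0 (n : nat) : set (Hamb n) := range (@iotaH n).

Definition policy := forall n : nat, R * Hamb n -> bool.

Definition Pi0DH (pi : policy) : Prop :=
  forall n : nat,
    mble_on (prodSA borelR (@HambSA n)) (@discrSA bool)
            (setT `*` @Hhat n) (pi n)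
    /\ (forall s h, @Hhat n h -> Aset (hx h n) (pi n (s, h)))
    /\ (forall h, @H0 n h -> pi n (0, h) = false).

Definition Btau (tau : Omega -> option nat) (n : nat) : set (Hn n) :=
  @Yn n @` [set w | tau w = Some n].

Definition dtau (tau : Omega -> option nat) (n : nat) (sh : R * Hamb n) : bool :=
  if `[< @H0 n sh.2 >] then
    `[< exists h, iotaH h = sh.2 /\ @Btau tau n h >] && (0 < sh.1)
  else true.

Definition pi_tau (tau : Omega -> option nat) : policy := fun n => @dtau tau n.

End Setting.

(* E is a Borel space: Borel-isomorphic to a Borel subset of R *)
Definition borel_space (R : realType) (d : measure_display) (E : measurableType d) : Prop :=
  exists f : E -> R, injective f /\ measurable_fun setT f /\
    measurable (range f) /\ (forall A, measurable A -> measurable (f @` A)).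

(* Main.v *)
Require Import Defs.
From HB Require Import structures.
From mathcomp Require Import all_boot all_order all_algebra.
From mathcomp Require Import all_classical all_reals all_analysis.
Set Implicit Arguments. Unset Strict Implicit. Unset Printing Implicit Defensive.
Import Order.TTheory GRing.Theory Num.Theory.
Local Open Scope classical_set_scope.
Local Open Scope ring_scope.

Section SA.
Context {T : Type} (G : set (set T)).
Lemma saC A : <<s G >> A -> <<s G >> (~` A).
Proof. by move=> h; rewrite -setTD; exact: sigma_algebraCD. Qed.
Lemma saT : <<s G >> setT.
Proof. by have := saC (@sigma_algebra0 _ setT G); rewrite setC0. Qed.
Lemma saU A B : <<s G >> A -> <<s G >> B -> <<s G >> (A `|` B).
Proof.
move=> hA hB; rewrite -bigcup2E; apply: sigma_algebra_bigcup => -[|[|k]] //=.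
exact: sigma_algebra0.
Qed.
Lemma saI A B : <<s G >> A -> <<s G >> B -> <<s G >> (A `&` B).
Proof.
move=> hA hB; rewrite -[A `&` B]setCK setCI; apply: saC; apply: saU; exact: saC.
Qed.
End SA.

Lemma prodSA_rect {T U} (MT : set (set T)) (MU : set (set U)) A B :
  MT A -> MU B -> prodSA MT MU (A `*` B).
Proof. by move=> hA hB; apply: sub_sigma_algebra; exists A, B. Qed.

Lemma tupleSA_rect {T} n (M : set (set T)) (S : 'I_n -> set T) :
  (forall i, M (S i)) -> @tupleSA _ n M [set t : n.-tuple T | forall i, S i (tnth t i)].
Proof. by move=> hS; apply: sub_sigma_algebra; exists S. Qed.

Lemma gt0_meas (R : realType) : borelR [set x : R | 0 < x].
Proof.
have -> : [set x : R | 0 < x] = `]0, +oo[%classic.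
  by apply/seteqP; split => x /=; rewrite in_itv /= andbT.
exact: measurable_itv.
Qed.

Section Main.
Context (R : realType) (d : measure_display) (E : measurableType d) (n : nat).
Local Notation Om := (Omega R E).

Definition dfl : bool * {nonneg R} * Ehat E := (false, 0%:nng, None).
Definition gH (h : Hamb R E n) : Om :=
  (odflt point h.1, fun k => let p := nth dfl (tval h.2) k in (p.1.2, odflt point p.2)).

Lemma Yn_coord (w w' : Om) : Yn n w = Yn n w' ->
  w.1 = w'.1 /\ forall k, (k < n)%N -> w.2 k = w'.2 k.
Proof.
move=> e; have h1 := congr1 fst e; have h2 := congr1 snd e; split => // k kn.
by have := congr1 (fun t => tnth t (Ordinal kn)) h2; rewrite /= !tnth_mktuple.
Qed.

Lemma Fn_sat (S : set Om) : Fn n S -> forall w w', Yn n w = Yn n w' -> S w -> S w'.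
Proof.
move=> FS.
pose K := [set S : set Om | forall w w', Yn n w = Yn n w' -> (S w <-> S w')].
suff : K S by move=> KS w w' e; case: (KS _ _ e).
apply: (smallest_sub _ _ FS).
  split.
  - by move=> w w' _.
  - move=> A KA w w' e /=; have [f g] := KA _ _ e.
    by split => -[_ nA]; split => // ?; apply: nA; [apply: g|apply: f].
  - move=> F hF w w' e; split => -[k _ Fk]; exists k => //; have [f g] := hF k _ _ e.
    + exact: f.
    + exact: g.
move=> A [m [mn [[B [_ ->]]|[B [_ ->]]]]] w w' e /=;
  have [e1 e2] := Yn_coord e.
- case: m mn => [|k] kn /=; first by rewrite e1.
  by rewrite e2.
- case: m mn => [|k] kn /=; first by [].
  by rewrite e2.
Qed.

Lemma gH_meas (S : set Om) : Fn n S -> @HambSA R d E n (gH @^-1` S).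
Proof.
move=> FS.
pose K := [set S : set Om | @HambSA R d E n (gH @^-1` S)].
suff : K S by [].
apply: (smallest_sub _ _ FS).
  split.
  - by rewrite /K /= preimage_set0; exact: sigma_algebra0.
  - by move=> A KA; rewrite /K /= setTD preimage_setC; apply: saC.
  - by move=> F hF; rewrite /K /= preimage_bigcup; apply: sigma_algebra_bigcup.
move=> A [m [mn [[B [mB ->]]|[B [mB ->]]]]]; rewrite /K /=.
- case: m mn => [|k] kn.
  + have -> : gH @^-1` (Xc 0 @^-1` B) =
      [set o : Ehat E | B (odflt point o)] `*` setT.
      by apply/seteqP; split => h /=; [move=> ?; split|case].
    apply: prodSA_rect; last exact: saT.
    exact: mB.
  + pose S0 := fun i : 'I_n => if val i == k then
        [set: bool * {nonneg R}] `*` [set o : Ehat E | B (odflt point o)] else setT.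
    have -> : gH @^-1` (Xc k.+1 @^-1` B) =
      setT `*` [set t | forall i, S0 i (tnth t i)].
      apply/seteqP; split => h /=.
      * move=> hB; split => // i; rewrite /S0; case: eqP => // ik.
        by split => //; rewrite (tnth_nth dfl) ik.
      * case=> _ /(_ (Ordinal kn)); rewrite /S0 /= eqxx => -[_].
        by rewrite (tnth_nth dfl).
    apply: prodSA_rect; first exact: measurableT.
    apply: tupleSA_rect => i; rewrite /S0; case: eqP => _; last exact: saT.
    apply: prodSA_rect; first exact: saT.
    exact: mB.
- case: m mn => [|k] kn.
  + case: (pselect (B 0)) => b.
    * have -> : gH @^-1` (Tc 0 @^-1` B) = setT by apply/seteqP; split.
      exact: saT.
    * have -> : gH @^-1` (Tc 0 @^-1` B) = set0 by apply/seteqP; split.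
      exact: sigma_algebra0.
  + pose S0 := fun i : 'I_n => if val i == k then
        ([set: bool] `*` [set x : {nonneg R} | B x%:num]) `*` [set: Ehat E] else setT.
    have -> : gH @^-1` (Tc k.+1 @^-1` B) =
      setT `*` [set t | forall i, S0 i (tnth t i)].
      apply/seteqP; split => h /=.
      * move=> hB; split => // i; rewrite /S0; case: eqP => // ik.
        by split => //; split => //; rewrite (tnth_nth dfl) ik.
      * case=> _ /(_ (Ordinal kn)); rewrite /S0 /= eqxx => -[[_]].
        by rewrite (tnth_nth dfl).
    apply: prodSA_rect; first exact: measurableT.
    apply: tupleSA_rect => i; rewrite /S0; case: eqP => _; last exact: saT.
    apply: prodSA_rect; last exact: measurableT.
    apply: prodSA_rect; first by [].
    by exists B.
Qed.

Definition H0set : set (bool * {nonneg R} * Ehat E) :=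
  ([set false] `*` setT) `*` [set o : Ehat E | o <> None].

Lemma H0E : @H0 R d E n =
  [set o : Ehat E | o <> None] `*` [set t | forall i, H0set (tnth t i)].
Proof.
apply/seteqP; split => h.
- case=> [[x t] _ <-] /=; split => // i; rewrite tnth_map /H0set /=.
  by split.
- case: h => o t; case.
  case: o => [x0|//] _ ht.
  exists (x0, map_tuple (fun p : bool * {nonneg R} * Ehat E => (p.1.2, odflt x0 p.2)) t) => //.
  rewrite /iotaH /=; congr pair; apply: eq_from_tnth => i.
  rewrite !tnth_map /=; have := ht i; rewrite /H0set.
  by case: (tnth t i) => [[a r] [y|]] /= [[/= -> _]] //.
Qed.

Lemma H0_meas : @HambSA R d E n (@H0 R d E n).
Proof.
rewrite H0E; apply: prodSA_rect.
  rewrite /EhatSA /=.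
  have -> : [set x : E | Some x <> None] = setT by apply/seteqP; split.
  exact: measurableT.
apply: (@tupleSA_rect _ _ _ (fun _ => H0set)) => i; apply: prodSA_rect.
  by apply: prodSA_rect; [|exists setT; split => //; exact: measurableT].
rewrite /EhatSA /=.
have -> : [set x : E | Some x <> None] = setT by apply/seteqP; split.
exact: measurableT.
Qed.

Lemma roundtrip (h : Hn R E n) : Yn n (gH (iotaH h)) = h.
Proof.
case: h => x t; rewrite /Yn /gH /iotaH /=; congr pair.
apply: eq_from_tnth => i; rewrite tnth_mktuple.
rewrite -[nth _ _ _](tnth_nth dfl (map_tuple _ t) i) tnth_map /=.
by case: (tnth t i).
Qed.

Lemma key (tau : Om -> option nat) : stopping_time tau ->
  forall h, @H0 R d E n h ->
  ((exists h', iotaH h' = h /\ Btau tau h') <-> tau (gH h) = Some n).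
Proof.
move=> st h [h' _ <-]; split.
- move=> [h'' [e [w tw ey]]].
  have e' : h'' = h' by rewrite -(roundtrip h'') -(roundtrip h') e.
  apply: (Fn_sat (st n) _ tw).
  by rewrite roundtrip ey e'.
- move=> t; exists h'; split => //; exists (gH (iotaH h')) => //.
  exact: roundtrip.
Qed.

Lemma dtau_true (tau : Om -> option nat) : stopping_time tau ->
  [set sh | @dtau R d E tau n sh] =
  (setT `*` ~` (@H0 R d E n)) `|`
  ([set s : R | 0 < s] `*` ((@H0 R d E n) `&` gH @^-1` [set w | tau w = Some n])).
Proof.
move=> st; apply/seteqP; split => -[s h]; rewrite /dtau /=.
- case: asboolP => hH /=; last by left.
  move=> /andP[/asboolP ex sp]; right; split => //; split => //.
  by apply/(key st hH).
- case: asboolP => hH //= [[_ //]|[sp [_ t]]].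
  apply/andP; split => //; apply/asboolP.
  by apply/(key st hH).
Qed.

End Main.

Lemma H0_hx (R : realType) (d : measure_display) (E : measurableType d) n
  (h : Hamb R E n) m : H0 h -> hx h m <> None.
Proof.
case=> [[x t] _ <-]; rewrite /hx /iotaH /=.
set s := (Some x :: _).
have alls : all (fun o : Ehat E => o != None) s.
  by rewrite /s /= -map_comp; apply/allP => o /mapP [p _ ->].
case: (ltnP m (size s)) => [lt|ge].
  by have := mem_nth (Some x) lt => /(allP alls) /eqP.
by rewrite nth_default.
Qed.

Theorem lemma4p3 (R : realType) (d : measure_display) (E : measurableType d)
  (hE : borel_space R E) (tau : Omega R E -> option nat) :
  stopping_time tau -> Pi0DH (pi_tau tau).
Proof.
move=> st n; split; [|split].
- move=> Y _; exists (dtau tau (n:=n) @^-1` Y); split => //.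
  have MM : prodSA (@borelR R) (@HambSA R d E n) [set sh | @dtau R d E tau n sh].
    rewrite (dtau_true n st); apply: saU.
      by apply: prodSA_rect; [exact: saT|apply: saC; exact: H0_meas].
    apply: prodSA_rect; first exact: gt0_meas.
    by apply: saI; [exact: H0_meas|exact: gH_meas].
  rewrite /pi_tau.
  case: (pselect (Y true)) => yt; case: (pselect (Y false)) => yf.
  + have -> : dtau tau (n:=n) @^-1` Y = setT.
      by apply/seteqP; split => sh //= _; case: dtau.
    exact: saT.
  + have -> : dtau tau (n:=n) @^-1` Y = [set sh | dtau tau sh].
      by apply/seteqP; split => sh /=; case: dtau.
    exact: MM.
  + have -> : dtau tau (n:=n) @^-1` Y = ~` [set sh | dtau tau sh].
      by apply/seteqP; split => sh /=; case: dtau.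
    exact: saC.
  + have -> : dtau tau (n:=n) @^-1` Y = set0.
      by apply/seteqP; split => sh //=; case: dtau.
    exact: sigma_algebra0.
- move=> s h _; rewrite /pi_tau /dtau /=.
  case hh: (hx h n) => [x|] //=.
  case: asboolP => // hH; by have := @H0_hx R d E n h n hH; rewrite hh.
- move=> h hH; rewrite /pi_tau /dtau /=.
  by case: asboolP => //= _; rewrite ltxx andbF.
Qed.
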